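(* For $b>0$ define $f_b:[0,1]\to\mathbb{R}$ by $f_b(x)=\dfrac{(b+1)x}{b+\sqrt{1-x^2}}$. Then: (i) $b_1=\dfrac{2}{\pi-2}$ is the largest value of $b>0$ such that $\arcsin x\le f_b(x)$ for all $x\in[0,1]$; (ii) $b_2=2$ is the smallest value of $b>0$ such that $f_b(x)\le \arcsin x$ for all $x\in[0,1]$; (iii) for every $b\in(b_1,2)$ the function $h_b(x)=f_b(x)-\arcsin x$ has a root in the open interval $(0,1)$.
   Context: The functions $f_b$ are exactly the members of the family $\Phi_{a,b}(x)=\frac{ax}{b+\sqrt{1-x^2}}$ ($a,b>0$) satisfying $\Phi_{a,b}(0)=\arcsin 0$ and $\Phi_{a,b}'(0)=\arcsin'(0)$. *)

(* Defs.v *)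
From Stdlib Require Export Reals.
Open Scope R_scope.

Definition f_b (b x : R) : R := (b + 1) * x / (b + sqrt (1 - x ^ 2)).

Definition h_b (b x : R) : R := f_b b x - asin x.

Definition b1 : R := 2 / (PI - 2).

(* Main.v *)
Require Import Defs.
From Stdlib Require Import Reals Lra Psatz.
From Coquelicot Require Import Coquelicot.
Open Scope R_scope.
Definition k (b t : R) := (b+1)*sin t - t*(b + cos t).
Definition r (s : R) := cos (s/2) - b1 * sin (s/2) / s.
Definition r' (s : R) := (b1*(sin(s/2) - (s/2)*cos(s/2)) - 2*(s/2)^2*sin(s/2)) / s^2.
Lemma kd b t : is_derive (k b) t (b*cos t - b + t*sin t).
Proof. unfold k. auto_derive; auto. ring. Qed.
Lemma rd s : 0 < s -> is_derive r s (r' s).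
Proof. intros Hs. unfold r, r'. auto_derive. lra. change (s * / 2) with (s/2). field. lra. Qed.
Lemma nrd s : 0 < s -> is_derive (fun s => - r s) s (- r' s).
Proof. intros Hs. apply (is_derive_opp r). now apply rd. Qed.
Lemma nkd b t : is_derive (fun s => - k b s) t (- (b*cos t - b + t*sin t)).
Proof. apply (is_derive_opp (k b)). apply kd. Qed.
Lemma cont b : continuity (fun t => - k b t).
Proof. unfold k. reg. Qed.
Lemma mono (f f' : R -> R) a b : a <= b ->
  (forall c, a <= c <= b -> is_derive f c (f' c)) ->
  (forall c, a <= c <= b -> 0 <= f' c) -> f a <= f b.
Proof.
  intros Hab Hd Hp. destruct (Req_dec a b) as [->|Hne]. lra.
  destruct (MVT_cor2 f f' a b) as [c [Hc1 Hc2]]. lra.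
  intros c Hc. apply is_derive_Reals. now apply Hd.
  assert (0 <= f' c) by (apply Hp; lra). nra.
Qed.
Ltac fcomp := unfold sin_ub, sin_lb, cos_ub, cos_lb, sin_approx, cos_approx, sin_term, cos_term; cbn [sum_f_R0];
  rewrite !INR_IZR_INZ;
  repeat match goal with |- context [Z.of_nat (Factorial.fact ?n)] =>
    let v := eval vm_compute in (Z.of_nat (Factorial.fact n)) in
    change (Z.of_nat (Factorial.fact n)) with v end;
  cbn [Nat.mul Nat.add]; field.
Lemma e1 u : sin_ub u = u - u^3/6 + u^5/120 - u^7/5040 + u^9/362880.
Proof. fcomp. Qed.
Lemma e2 u : sin_lb u = u - u^3/6 + u^5/120 - u^7/5040.
Proof. fcomp. Qed.
Lemma e3 u : cos_ub u = 1 - u^2/2 + u^4/24 - u^6/720 + u^8/40320.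
Proof. fcomp. Qed.
Lemma e4 u : cos_lb u = 1 - u^2/2 + u^4/24 - u^6/720.
Proof. fcomp. Qed.
Lemma PI3 : 3 < PI <= 4.
Proof. pose proof PI2_3_2. pose proof PI_4. lra. Qed.
Lemma tb u : 0 <= u <= PI/2 ->
  u - u^3/6 <= sin u <= u - u^3/6 + u^5/120 /\
  1 - u^2/2 + u^4/24 - u^6/720 <= cos u <= 1 - u^2/2 + u^4/24.
Proof.
  intros H. pose proof PI3. assert (u <= 2) by lra.
  destruct (SIN u ltac:(lra) ltac:(lra)) as [S1 S2].
  destruct (COS u ltac:(lra) ltac:(lra)) as [C1 C2].
  rewrite e1 in S2; rewrite e2 in S1; rewrite e3 in C2; rewrite e4 in C1.
  assert (U2 : u^2 <= 4) by (simpl; nra).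
  assert (P5 : 0 <= u^5) by (apply pow_le; lra).
  assert (P7 : 0 <= u^7) by (apply pow_le; lra).
  assert (P6 : 0 <= u^6) by (apply pow_le; lra).
  assert (0 <= u^5 * (42 - u^2)) by (apply Rmult_le_pos; lra).
  assert (0 <= u^7 * (72 - u^2)) by (apply Rmult_le_pos; lra).
  assert (0 <= u^6 * (56 - u^2)) by (apply Rmult_le_pos; lra).
  repeat split; nra.
Qed.
Lemma ineqA u : 0 <= u <= 1 -> sin u - u * cos u <= u^2 * sin u.
Proof.
  intros H. pose proof PI3. destruct (tb u ltac:(lra)) as [[S1 S2] [C1 C2]].
  assert (u^2 * (u - u^3/6) <= u^2 * sin u) by (apply Rmult_le_compat_l; [nra|lra]).
  assert (u * (1 - u^2/2 + u^4/24 - u^6/720) <= u * cos u) by (apply Rmult_le_compat_l; lra).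
  assert (0 <= u^3 * (2/3 - 2*u^2/15 - u^4/720)).
  { apply Rmult_le_pos. apply pow_le; lra. assert (u^2 <= 1) by nra. assert (u^4 <= 1) by nra. lra. }
  nra.
Qed.
Lemma ineqB t : 0 <= t <= PI/2 -> 3 * sin t - t * (2 + cos t) <= 0.
Proof.
  intros H. destruct (tb t ltac:(lra)) as [[S1 S2] [C1 C2]]. pose proof PI3.
  assert (t * (1 - t^2/2 + t^4/24 - t^6/720) <= t * cos t) by (apply Rmult_le_compat_l; lra).
  assert (0 <= t^5 * (12 - t^2)) by (apply Rmult_le_pos; [apply pow_le; lra| simpl; nra]).
  nra.
Qed.
Lemma ineqC b t : 0 < b -> 0 < t <= 1 -> t^2 < 4*(2-b) -> 0 < (b+1)*sin t - t*(b + cos t).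
Proof.
  intros Hb H H2. pose proof PI3. destruct (tb t ltac:(lra)) as [[S1 S2] [C1 C2]].
  assert ((b+1)*(t - t^3/6) <= (b+1)*sin t) by (apply Rmult_le_compat_l; lra).
  assert (t * cos t <= t * (1 - t^2/2 + t^4/24)) by (apply Rmult_le_compat_l; lra).
  assert (0 < t^3 * (4*(2-b) - t^2)) by (apply Rmult_lt_0_compat; [apply pow_lt; lra| lra]).
  nra.
Qed.
Lemma asin_rng x : 0 <= x <= 1 -> 0 <= asin x <= PI/2.
Proof.
  intros H. pose proof (asin_bound x). pose proof PI3. split; [|lra].
  destruct (Rle_lt_dec 0 (asin x)) as [|Hn]; auto. exfalso.
  assert (sin (asin x) < 0) by (apply sin_lt_0_var; lra).
  rewrite sin_asin in H2 by lra. lra.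
Qed.
Lemma conv b x : 0 < b -> 0 <= x <= 1 ->
  f_b b x - asin x = k b (asin x) / (b + cos (asin x)) /\ 0 < b + cos (asin x).
Proof.
  intros Hb H. unfold f_b, k. rewrite sin_asin by lra. rewrite cos_asin by lra.
  replace (x^2) with (x²) by (unfold Rsqr; ring).
  pose proof (sqrt_pos (1 - x²)). split; [field|]; lra.
Qed.
Lemma sgn_ge b x : 0 < b -> 0 <= x <= 1 -> 0 <= k b (asin x) -> asin x <= f_b b x.
Proof.
  intros Hb H Hk. destruct (conv b x Hb H) as [E D].
  assert (0 < / (b + cos (asin x))) by (apply Rinv_0_lt_compat; lra).
  assert (0 <= k b (asin x) / (b + cos (asin x))) by (unfold Rdiv; nra). lra.
Qed.
Lemma sgn_le b x : 0 < b -> 0 <= x <= 1 -> k b (asin x) <= 0 -> f_b b x <= asin x.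
Proof.
  intros Hb H Hk. destruct (conv b x Hb H) as [E D].
  assert (0 < / (b + cos (asin x))) by (apply Rinv_0_lt_compat; lra).
  assert (k b (asin x) / (b + cos (asin x)) <= 0) by (unfold Rdiv; nra). lra.
Qed.
Lemma sgn_gt b x : 0 < b -> 0 <= x <= 1 -> 0 < k b (asin x) -> asin x < f_b b x.
Proof.
  intros Hb H Hk. destruct (conv b x Hb H) as [E D].
  assert (0 < / (b + cos (asin x))) by (apply Rinv_0_lt_compat; lra).
  assert (0 < k b (asin x) / (b + cos (asin x))) by (unfold Rdiv; nra). lra.
Qed.
Lemma sgn_eq b x : 0 < b -> 0 <= x <= 1 -> k b (asin x) = 0 -> h_b b x = 0.
Proof.
  intros Hb H Hk. destruct (conv b x Hb H) as [E D]. unfold h_b. rewrite E, Hk. field. lra.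
Qed.
Lemma b1_facts : 0 < b1 < 2 /\ b1 * (PI/2 - 1) = 1.
Proof.
  pose proof PI3. unfold b1. split; [split|].
  apply Rdiv_lt_0_compat; lra.
  apply Rmult_lt_reg_r with (PI - 2). lra. field_simplify; lra.
  field. lra.
Qed.
Lemma r'_neg s : 0 < s <= PI/2 -> r' s <= 0.
Proof.
  intros H. pose proof PI3. destruct b1_facts as [[B0 B2] _]. unfold r'.
  set (u := s/2). assert (Hu : 0 < u <= 1) by (unfold u; lra).
  pose proof (ineqA u ltac:(lra)) as A.
  assert (Su : 0 < sin u) by (apply sin_gt_0; lra).
  assert (0 <= u^2 * sin u) by (apply Rmult_le_pos; [apply pow_le|]; lra).
  assert (N : b1 * (sin u - u * cos u) - 2 * u^2 * sin u <= 0).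
  { destruct (Rle_lt_dec 0 (sin u - u * cos u)). nra. nra. }
  assert (0 < / s^2) by (apply Rinv_0_lt_compat; apply pow_lt; lra).
  unfold Rdiv. nra.
Qed.
Lemma rmono a c : 0 < a <= c -> c <= PI/2 -> r c <= r a.
Proof.
  intros H1 H2.
  assert (- r a <= - r c).
  { apply (mono (fun s => - r s) (fun s => - r' s) a c). lra.
    intros x Hx. apply nrd. lra.
    intros x Hx. pose proof (r'_neg x ltac:(lra)). lra. }
  lra.
Qed.
Lemma ident s : 0 < s -> b1*cos s - b1 + s*sin s = 2*sin(s/2)*s*r s.
Proof.
  intros H. unfold r. set (u := s/2).
  replace s with (2*u) by (unfold u; field). rewrite sin_2a, cos_2a_sin. field. unfold u; lra.
Qed.
Lemma part1 t : 0 <= t <= PI/2 -> 0 <= k b1 t.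
Proof.
  intros H. pose proof PI3. destruct b1_facts as [[B0 B2] Be].
  destruct (Req_dec t 0) as [->|Ht]. unfold k. rewrite sin_0, cos_0. lra.
  assert (Ht' : 0 < t) by lra.
  destruct (Rle_lt_dec 0 (r t)) as [Hr|Hr].
  - replace 0 with (k b1 0) by (unfold k; rewrite sin_0, cos_0; ring).
    apply (mono (k b1) (fun c => b1*cos c - b1 + c*sin c) 0 t). lra.
    intros; apply kd.
    intros c Hc. destruct (Req_dec c 0) as [->|Hc0]. rewrite cos_0, sin_0. lra.
    rewrite ident by lra. pose proof (rmono c t ltac:(lra) ltac:(lra)).
    assert (0 < sin (c/2)) by (apply sin_gt_0; lra).
    assert (0 <= 2 * sin (c/2) * c) by nra. nra.
  - assert (- k b1 t <= - k b1 (PI/2)).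
    { apply (mono (fun s => - k b1 s) (fun c => - (b1*cos c - b1 + c*sin c)) t (PI/2)). lra.
      intros; apply nkd.
      intros c Hc. rewrite ident by lra. pose proof (rmono t c ltac:(lra) ltac:(lra)).
      assert (0 < sin (c/2)) by (apply sin_gt_0; lra).
      assert (0 <= 2 * sin (c/2) * c) by nra. nra. }
    assert (k b1 (PI/2) = 0) by (unfold k; rewrite sin_PI2, cos_PI2; nra). lra.
Qed.
Lemma small b : 0 < b < 2 -> let t := Rmin 1 (2-b) in 0 < t <= 1 /\ 0 < k b t.
Proof.
  intros Hb t. assert (0 < t <= 1 /\ t <= 2 - b).
  { unfold t, Rmin. destruct (Rle_dec 1 (2-b)); lra. }
  split. lra. apply ineqC; try lra. simpl. nra.
Qed.
Lemma sin_rng t : 0 < t <= 1 -> 0 <= sin t <= 1 /\ asin (sin t) = t.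
Proof.
  intros H. pose proof PI3. pose proof (SIN_bound t).
  assert (0 < sin t) by (apply sin_gt_0; lra).
  split. lra. apply asin_sin. lra.
Qed.

Theorem mainTheorem2 :
  (* (i) b1 is the largest b > 0 with asin x <= f_b x on [0,1] *)
  (0 < b1 /\ (forall x, 0 <= x <= 1 -> asin x <= f_b b1 x) /\
   (forall b, 0 < b -> (forall x, 0 <= x <= 1 -> asin x <= f_b b x) -> b <= b1)) /\
  (* (ii) 2 is the smallest b > 0 with f_b x <= asin x on [0,1] *)
  ((forall x, 0 <= x <= 1 -> f_b 2 x <= asin x) /\
   (forall b, 0 < b -> (forall x, 0 <= x <= 1 -> f_b b x <= asin x) -> 2 <= b)) /\
  (* (iii) for b in (b1, 2), h_b has a root in (0,1) *)
  (forall b, b1 < b < 2 -> exists x, 0 < x < 1 /\ h_b b x = 0).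
Proof.
  pose proof PI3. destruct b1_facts as [[B0 B2] Be].
  split; [split; [lra|split]|split; [split|]].
  - intros x Hx. apply sgn_ge; try lra. apply part1. apply asin_rng; lra.
  - intros b Hb Hall. specialize (Hall 1 ltac:(lra)). rewrite asin_1 in Hall.
    unfold f_b in Hall. replace (1 - 1^2) with 0 in Hall by ring. rewrite sqrt_0 in Hall.
    replace ((b+1)*1/(b+0)) with ((b+1)/b) in Hall by (field; lra).
    assert (b * (PI/2) <= b + 1).
    { apply Rmult_le_compat_l with (r := b) in Hall; [|lra].
      replace (b * ((b+1)/b)) with (b+1) in Hall by (field; lra). lra. }
    assert (b * (PI/2 - 1) <= b1 * (PI/2 - 1)) by nra.
    apply Rmult_le_reg_r with (PI/2 - 1); lra.
  - intros x Hx. apply sgn_le; try lra. destruct (asin_rng x Hx).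
    pose proof (ineqB (asin x) ltac:(lra)). unfold k. lra.
  - intros b Hb Hall. destruct (Rle_lt_dec 2 b) as [|Hlt]; auto. exfalso.
    destruct (small b ltac:(lra)) as [Ht Hk]. set (t := Rmin 1 (2-b)) in *.
    destruct (sin_rng t Ht) as [Hs Ha].
    specialize (Hall (sin t) Hs).
    pose proof (sgn_gt b (sin t) ltac:(lra) Hs ltac:(rewrite Ha; exact Hk)). lra.
  - intros b Hb. destruct (small b ltac:(lra)) as [Ht Hk]. set (t := Rmin 1 (2-b)) in *.
    assert (Kp : k b (PI/2) < 0).
    { unfold k. rewrite sin_PI2, cos_PI2. assert (b * (PI/2 - 1) > b1 * (PI/2 - 1)) by nra. nra. }
    destruct (IVT (fun s => - k b s) t (PI/2) (cont b) ltac:(lra) ltac:(lra) ltac:(lra)) as [z [Hz Hz0]].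
    assert (Hzp : z <> PI/2) by (intro E; rewrite E in Hz0; lra).
    assert (0 < sin z) by (apply sin_gt_0; lra).
    assert (Az : asin (sin z) = z) by (apply asin_sin; lra).
    assert (sin z <= 1) by (pose proof (SIN_bound z); lra).
    assert (sin z <> 1) by (intro E; rewrite E, asin_1 in Az; lra).
    exists (sin z). split. lra. apply sgn_eq. lra. lra. rewrite Az. lra.
Qed.
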